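(* Let $C\subset V$ be an open cone containing no lines, with basepoint $b\in C$. The set of horofunctions of the reverse Funk geometry on $C$ is $\{r_{C,x}: x\in\partial C\setminus\{0\}\}$, and every one of these horofunctions is a Busemann point of the reverse Funk geometry. Moreover, if $D$ is a cross section of $C$, a sequence in $D$ converges in the reverse Funk sense to $r_{C,x}$ (with $x\in\partial C\setminus\{0\}$) if and only if it converges in the usual topology of $V$ to a positive multiple of $x$.
   Context: $V$ is a finite-dimensional real vector space. An open cone is a nonempty open convex set $T\subset V$ with $\lambda T\subseteq T$ for all $\lambda>0$ and $0\notin T$; $\partial T$ is its boundary in $V$. Write $x\le_T y$ iff $y-x\in\overline T$. For $y\in V$, $x\in T$: $M_T(y/x):=\inf\{\lambda>0:y\le_T\lambda x\}$, Funk function $F_T(y,x):=\log M_T(y/x)$, reverse Funk function $RF_T(x,y):=F_T(y,x)$. For $p\in\partial C\setminus\{0\}$, $r_{C,p}(x):=RF_C(x,p)-RF_C(b,p)$ for $x\in C$. A sequence $(x_n)$ in $C$ converges in the reverse Funk sense to $g:C\to\mathbb R$ if $RF_C(\cdot,x_n)-RF_C(b,x_n)\to g$ pointwise on $C$. A horofunction of the reverse Funk geometry is such a limit not of the form $RF_C(\cdot,p)-RF_C(b,p)$, $p\in C$. An almost-geodesic for $RF_C$ is a sequence $(x_l)$ in $C$ with, for some $\epsilon>0$, $\sum_{i=1}^l RF_C(x_{i-1},x_i)\le RF_C(x_0,x_l)+\epsilon$ for all $l\ge1$; a Busemann point is a reverse-Funk-sense limit of an almost-geodesic not of the form $RF_C(\cdot,p)-RF_C(b,p)$,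 $p\in C$. A cross section of $C$ is a set $D=\{x\in C:\psi(x)=1\}$ where $\psi$ is a linear functional on $V$ that is strictly positive on $\overline C\setminus\{0\}$. *)

(* Defs.v *)
From HB Require Import structures.
From mathcomp Require Import all_boot all_order all_algebra.
From mathcomp Require Import all_classical all_reals all_analysis.
Set Implicit Arguments. Unset Strict Implicit. Unset Printing Implicit Defensive.
Import Order.TTheory GRing.Theory Num.Theory.
Import numFieldNormedType.Exports.
Local Open Scope classical_set_scope.
Local Open Scope ring_scope.

Section FunkDefs.
Variables (R : realType) (n : nat).
Local Notation V := 'rV[R]_n.

Definition bdry (T : set V) : set V := closure T `\` interior T.

Definition open_cone (T : set V) : Prop :=
  [/\ T !=set0, open T,
      (forall x y t, T x -> T y -> 0 <= t -> t <= 1 -> T (t *: x + (1 - t) *: y)),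
      (forall x l, T x -> 0 < l -> T (l *: x)) & ~ T 0].

Definition no_lines (T : set V) : Prop :=
  forall x v : V, (forall t : R, T (x + t *: v)) -> v = 0.

Definition cone_le (T : set V) (x y : V) : Prop := closure T (y - x).

Definition Mfun (T : set V) (y x : V) : R :=
  inf [set l : R | 0 < l /\ cone_le T y (l *: x)].

Definition Funk (T : set V) (y x : V) : R := ln (Mfun T y x).

Definition RFunk (T : set V) (x y : V) : R := Funk T y x.

Definition rfun (C : set V) (b p : V) : V -> R :=
  fun x => RFunk C x p - RFunk C b p.

Definition RF_converges (C : set V) (b : V) (xs : nat -> V) (g : V -> R) : Prop :=
  (forall k, C (xs k)) /\
  forall z, C z -> (fun k => RFunk C z (xs k) - RFunk C b (xs k)) @ \oo --> g z.

Definition is_internal (C : set V) (b : V) (g : V -> R) : Prop :=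
  exists2 p, C p & forall z, C z -> g z = RFunk C z p - RFunk C b p.

Definition horofunction (C : set V) (b : V) (g : V -> R) : Prop :=
  (exists xs, RF_converges C b xs g) /\ ~ is_internal C b g.

Definition almost_geodesic (C : set V) (xs : nat -> V) : Prop :=
  (forall k, C (xs k)) /\
  exists2 eps : R, 0 < eps &
    forall l : nat, (1 <= l)%N ->
      \sum_(1 <= i < l.+1) RFunk C (xs i.-1) (xs i) <= RFunk C (xs 0%N) (xs l) + eps.

Definition busemann_point (C : set V) (b : V) (g : V -> R) : Prop :=
  (exists2 xs, almost_geodesic C xs & RF_converges C b xs g) /\ ~ is_internal C b g.

Definition cross_section_functional (C : set V) (psi : V -> R) : Prop :=
  (forall (a : R) (x y : V), psi (a *: x + y) = a * psi x + psi y) /\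
  (forall x, closure C x -> x != 0 -> 0 < psi x).

End FunkDefs.

(* Main.v *)
Require Import Defs.
From HB Require Import structures.
From mathcomp Require Import all_boot all_order all_algebra.
From mathcomp Require Import all_classical all_reals all_analysis.
From mathcomp Require Import lra ring.
Import Order.TTheory GRing.Theory Num.Theory.
Import numFieldNormedType.Exports.
Local Open Scope classical_set_scope.
Local Open Scope ring_scope.
Set Implicit Arguments. Unset Strict Implicit. Unset Printing Implicit Defensive.

Section S.
Variables (R : realType) (n : nat).
Local Notation V := 'rV[R]_n.

Lemma ler_gtP (x y : R) : reflect (forall z, z > y -> x <= z) (x <= y).
Proof.
apply: (equivP (ler_addgt0Pr _ _)); split=> [xy z|xz e e_gt0].
  by rewrite -subr_gt0 => /xy; rewrite addrC addrNK.
by apply: xz; rewrite -[X in X < _]addr0 ltrD2l.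
Qed.

Lemma clP (A : set V) y : closure A y <-> forall e : R, 0 < e -> exists w, A w /\ `|y - w| < e.
Proof.
split.
- move=> cl e e0; have [|w [Aw bw]] := cl (ball y e); first exact: nbhsx_ballx.
  by exists w; split => //; move: bw; rewrite -ball_normE.
- move=> H B /nbhs_ballP [e e0 sB]; have [w [Aw yw]] := H e e0.
  by exists w; split => //; apply: sB; rewrite -ball_normE.
Qed.

Lemma aux_contra (A B P Q : R) : A <= 0 -> Q - B + 1 < P -> A - B = P - Q -> False.
Proof. lra. Qed.

Lemma aux_eq (A B P Q : R) : A - B = P - Q -> P = Q + - B + A.
Proof. lra. Qed.

Lemma aux_inv (p q : R) : 0 < p -> 0 < q -> p / q * (q / p) = 1.
Proof. move=> p0 q0; rewrite mulrA divfK ?divff // lt0r_neq0 //. Qed.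

Lemma scale_aux (a c : R) (u v : V) : a * c = 1 -> a *: (c *: v - u) = - (a *: u - v).
Proof. by move=> h; rewrite scalerBr scalerA h scale1r opprB. Qed.

Lemma cluster_sub (ys : nat -> V) (A : set V) y :
  (forall k, A (ys k)) -> cluster (ys @ \oo) y -> closure A y.
Proof.
move=> HA cy B nB; apply: (cy A B) => //; exists 0%N => // k _; exact: HA.
Qed.

Lemma cluster_val (ys : nat -> V) (H : V -> R) y L :
  cluster (ys @ \oo) y -> {for y, continuous H} ->
  (fun k => H (ys k)) @ \oo --> L -> H y = L.
Proof.
move=> cy cH cL; apply/eqP; rewrite -subr_eq0 -normr_le0; apply/ler_gtP => e e0.
have e2 : 0 < e / 2 by rewrite divr_gt0.
have FA : (ys @ \oo) [set v | `|L - H v| < e / 2].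
  exact: ((@cvgrPdist_lt _ _ _ \oo _ (fun k => H (ys k)) L).1 cL _ e2).
have NB : nbhs y [set v | `|H y - H v| < e / 2].
  exact: ((@cvgrPdist_lt _ _ _ (nbhs y) _ H (H y)).1 cH _ e2).
have [v [/= h1 h2]] := cy _ _ FA NB.
have -> : H y - L = (H y - H v) + (H v - L) by rewrite addrA subrK.
apply: ltW; apply: le_lt_trans (ler_normD _ _) _.
by rewrite [X in _ < X](splitr e) ltrD // distrC.
Qed.

Lemma cluster_norm (ys : nat -> V) y :
  (forall k, `|ys k| = 1) -> cluster (ys @ \oo) y -> `|y| = 1.
Proof.
move=> H1 cy; have := cluster_sub (A := [set u | `|u| = 1]) H1 cy.
move=> /clP cl; apply/eqP; rewrite -subr_eq0 -normr_le0; apply/ler_gtP => e e0.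
have [w [/= w1 hw]] := cl e e0; rewrite -w1; apply: le_trans (ler_dist_dist _ _) _.
exact: ltW.
Qed.

Lemma Bc_compact : compact (closed_ball (0 : V) 2).
Proof.
apply: bounded_closed_compact; last exact: closed_ball_closed.
exists 2; split; first by rewrite num_real.
move=> M M2 x; rewrite closed_ballE ?ltr0n // /closed_ball_ /= sub0r normrN => h.
by apply: le_trans h (ltW M2).
Qed.

Lemma cluster_exists (ys : nat -> V) :
  (forall k, `|ys k| = 1) -> exists y, cluster (ys @ \oo) y.
Proof.
move=> H1; have [|y [_ cy]] := Bc_compact (F := ys @ \oo).
  exists 0%N => // k _; rewrite closed_ballE ?ltr0n // /closed_ball_ /= sub0r normrN H1.
  by rewrite ler1n.
by exists y.
Qed.

Lemma cvg_unique_cluster (ys : nat -> V) p :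
  (forall k, `|ys k| = 1) -> `|p| = 1 ->
  (forall y, cluster (ys @ \oo) y -> y = p) -> ys @ \oo --> p.
Proof.
move=> H1 p1 Hc.
apply: (compact_cluster_set1 (V := closed_ball (0 : V) 2)).
- exact: norm_hausdorff.
- exact: Bc_compact.
- apply/nbhs_ballP; exists 1 => //= w; rewrite -ball_normE /= => hw.
  rewrite closed_ballE ?ltr0n // /closed_ball_ /= sub0r normrN.
  have : `|w| <= `|p| + `|w - p| by rewrite -{1}(subrK p w) addrC ler_normD.
  rewrite p1 distrC => h; apply: le_trans h _.
  by rewrite (_ : 2 = 1 + 1 :> R) ?lerD2l ?ltW // -natrD.
- exists 0%N => // k _; rewrite closed_ballE ?ltr0n // /closed_ball_ /= sub0r normrN H1.
  by rewrite ler1n.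
- apply/seteqP; split => y; first exact: Hc.
  move=> /= ->; have [y' cy'] := cluster_exists H1; by rewrite -(Hc _ cy').
Qed.

Variable C : set V.
Hypothesis hC : open_cone C.
Hypothesis hL : no_lines C.

Lemma Copen c : C c -> exists2 r : R, 0 < r & forall w, `|c - w| < r -> C w.
Proof.
case: hC => _ op _ _ _ Cc.
have : nbhs c C by move: op; rewrite openE => /(_ c Cc).
move=> /nbhs_ballP [r r0 sB]; exists r => // w cw; apply: sB.
by rewrite -ball_normE.
Qed.

Lemma Cscale x l : C x -> 0 < l -> C (l *: x).
Proof. by case: hC => _ _ _ H _; apply: H. Qed.

Lemma Cadd x y : C x -> C y -> C (x + y).
Proof.
case: hC => _ _ cv _ _ Cx Cy.
have := cv x y (2^-1) Cx Cy; rewrite invr_ge0 ler0n invf_le1 ?ltr0n // ler1n.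
move=> /(_ isT isT) H.
have -> : x + y = 2 *: (2^-1 *: x + (1 - 2^-1) *: y).
  have -> : (1 - 2^-1 : R) = 2^-1 by rewrite {1}(splitr 1) mul1r addrK.
  by rewrite scalerDr !scalerA divff ?pnatr_eq0 // !scale1r.
by apply: Cscale => //; rewrite ltr0n.
Qed.

Lemma clsub x : C x -> closure C x.
Proof. exact: subset_closure. Qed.

Lemma clscale x l : closure C x -> 0 <= l -> closure C (l *: x).
Proof.
move=> /clP cx; rewrite le_eqVlt => /orP [/eqP <-|l0].
  rewrite scale0r; apply/clP => e e0.
  case: hC => [[c Cc] _ _ _ _].
  have nc0 : 0 <= `|c| by [].
  exists (((`|c| + 1)^-1 * e) *: c); split.
    by apply: Cscale => //; rewrite mulr_gt0 // invr_gt0 ltr_wpDl.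
  rewrite sub0r normrN normrZ ger0_norm; last by rewrite mulr_ge0 // ltW // invr_gt0 ltr_wpDl.
  by rewrite -mulrA mulrC ltr_pdivrMr ?ltr_wpDl // ltr_pM2l // ltrDl.
apply/clP => e e0; have [w [Cw xw]] := cx (e / l) (divr_gt0 e0 l0).
exists (l *: w); split; first exact: Cscale.
by rewrite -scalerBr normrZ gtr0_norm // mulrC -ltr_pdivlMr.
Qed.

Lemma cl0 : closure C 0.
Proof.
case: hC => [[c Cc] _ _ _ _]; rewrite -(scale0r c); apply: clscale => //.
exact: clsub.
Qed.

Lemma clCadd x y : closure C x -> C y -> C (x + y).
Proof.
move=> /clP cx Cy; have [r r0 Hr] := Copen Cy.
have [w [Cw xw]] := cx r r0.
have -> : x + y = (y + (x - w)) + w by rewrite addrC -addrA subrK.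
apply: Cadd => //; apply: Hr; by rewrite opprD addrA subrr sub0r normrN.
Qed.

Lemma cladd x y : closure C x -> closure C y -> closure C (x + y).
Proof.
move=> /clP cx /clP cy; apply/clP => e e0.
have [w1 [C1 h1]] := cx (e/2) (divr_gt0 e0 (ltr0n _ 2)).
have [w2 [C2 h2]] := cy (e/2) (divr_gt0 e0 (ltr0n _ 2)).
exists (w1 + w2); split; first exact: Cadd.
have -> : x + y - (w1 + w2) = (x - w1) + (y - w2).
  by rewrite opprD addrACA.
by apply: le_lt_trans (ler_normD _ _) _; rewrite (splitr e) ltrD.
Qed.

Lemma clneg u : closure C u -> closure C (- u) -> u = 0.
Proof.
move=> cu cnu; case: hC => [[c Cc] _ _ _ _].
apply: (hL (x := c)) => t; rewrite addrC.
have ctu : closure C (t *: u).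
  case: (leP 0 t) => t0; first exact: clscale.
  by rewrite -[t]opprK scaleNr -scalerN; apply: clscale => //; rewrite oppr_ge0 ltW.
exact: (clCadd ctu Cc).
Qed.
Lemma cllim v a : (forall e : R, 0 < e -> closure C (v + e *: a)) -> closure C v.
Proof.
move=> H; apply/clP => e e0.
have ha : 0 < `|a| + 1 by rewrite ltr_wpDl.
have e2 : 0 < e / 2 by rewrite divr_gt0.
have [w [Cw hw]] := (clP _ _).1 (H (e / 2 / (`|a| + 1)) (divr_gt0 e2 ha)) (e/2) e2.
exists w; split => //.
have -> : v - w = (v + e / 2 / (`|a| + 1) *: a - w) - e / 2 / (`|a| + 1) *: a.
  by rewrite addrAC addrK.
apply: le_lt_trans (ler_normB _ _) _; rewrite [X in _ < X](splitr e) ltrD // normrZ.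
rewrite gtr0_norm ?divr_gt0 // mulrAC ltr_pdivrMr // ltr_pM2l // ltrDl //.
Qed.


Definition Eset (y z : V) := [set l : R | 0 < l /\ cone_le C y (l *: z)].

Lemma Ene z y : C z -> Eset y z !=set0.
Proof.
move=> Cz; have [r r0 Hr] := Copen Cz.
have l0 : 0 < `|y| / r + 1 by rewrite ltr_wpDl // divr_ge0 // ltW.
exists (`|y| / r + 1); split => //; apply: clsub.
have -> : (`|y| / r + 1) *: z - y = (`|y| / r + 1) *: (z - (`|y| / r + 1)^-1 *: y).
  by rewrite scalerBr scalerA divff ?scale1r // gt_eqF.
apply: Cscale => //; apply: Hr.
rewrite opprB addrC subrK normrZ gtr0_norm ?invr_gt0 //.
rewrite mulrC ltr_pdivrMr // mulrDr mulrCA divff ?gt_eqF // mulr1 mulr1.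
by rewrite ltrDl.
Qed.

Lemma Elb y z : lbound (Eset y z) 0.
Proof. by move=> l [l0 _]; apply: ltW. Qed.

Lemma Mge0 z y : C z -> 0 <= Mfun C y z.
Proof. by move=> Cz; apply: lb_le_inf; [exact: Ene| exact: Elb]. Qed.

Lemma MP z y l : C z -> 0 < l -> (closure C (l *: z - y) <-> Mfun C y z <= l).
Proof.
move=> Cz l0; split.
  move=> H; apply: ge_inf; last by split.
  by exists 0; exact: Elb.
move=> Ml; apply: (cllim (a := z)) => e e0.
have ll : l < l + e by rewrite ltrDl.
have [l' [l'0 cl'] l'lt] := inf_lt (Ene y Cz) (le_lt_trans Ml ll).
rewrite /cone_le in cl'.
have -> : l *: z - y + e *: z = (l' *: z - y) + (l + e - l') *: z.
  by rewrite scalerBl scalerDl [RHS]addrC addrA subrK addrAC.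
have h2 : closure C ((l + e - l') *: z) by apply: clscale; [exact: clsub|rewrite subr_ge0 ltW].
exact: (cladd cl' h2).
Qed.


Lemma Mmono z u v : C z -> closure C (v - u) -> Mfun C u z <= Mfun C v z.
Proof.
move=> Cz cvu; apply/ler_gtP => l lM.
have l0 : 0 < l by apply: le_lt_trans lM; apply: Mge0.
apply/(MP _ Cz l0); have := (MP v Cz l0).2 (ltW lM) => h.
by have := cladd h cvu; rewrite addrA subrK.
Qed.

Lemma Mself z : C z -> Mfun C z z <= 1.
Proof. by move=> Cz; apply/(MP _ Cz ltr01); rewrite scale1r subrr; exact: cl0. Qed.

Lemma Msub z u v : C z -> Mfun C (u + v) z <= Mfun C u z + Mfun C v z.
Proof.
move=> Cz; apply/ler_gtP => l lM.
set d := l - (Mfun C u z + Mfun C v z).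
have d0 : 0 < d by rewrite subr_gt0.
have d2 : 0 < d / 2 by rewrite divr_gt0.
have l1 : 0 < Mfun C u z + d / 2 by rewrite ltr_wpDl // Mge0.
have l2 : 0 < Mfun C v z + d / 2 by rewrite ltr_wpDl // Mge0.
have e1 : Mfun C u z <= Mfun C u z + d / 2 by rewrite lerDl ltW.
have e2 : Mfun C v z <= Mfun C v z + d / 2 by rewrite lerDl ltW.
have h1 := (MP u Cz l1).2 e1.
have h2 := (MP v Cz l2).2 e2.
have hl : l = (Mfun C u z + d / 2) + (Mfun C v z + d / 2).
  by rewrite addrACA -splitr /d addrC subrK.
have l0 : 0 < l by apply: le_lt_trans lM; rewrite addr_ge0 // Mge0.
apply/(MP _ Cz l0).
rewrite hl scalerDl opprD addrACA; exact: (cladd h1 h2).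
Qed.

Lemma Mscale_le z u c : C z -> 0 < c -> Mfun C (c *: u) z <= c * Mfun C u z.
Proof.
move=> Cz c0; apply/ler_gtP => l lM.
have l0 : 0 < l by apply: le_lt_trans lM; rewrite mulr_ge0 // ?Mge0 // ltW.
apply/(MP _ Cz l0).
have lc0 : 0 < l / c by rewrite divr_gt0.
have := (MP u Cz lc0).2 (ltW _); rewrite ltr_pdivlMr // mulrC => /(_ lM) h.
have := clscale h (ltW c0); rewrite scalerBr scalerA mulrC divfK ?gt_eqF //.
Qed.

Lemma Mscale z u c : C z -> 0 < c -> Mfun C (c *: u) z = c * Mfun C u z.
Proof.
move=> Cz c0; apply/eqP; rewrite eq_le Mscale_le //=.
have ci : 0 < c^-1 by rewrite invr_gt0.
have := Mscale_le (c *: u) Cz ci; rewrite scalerA mulVf ?gt_eqF // scale1r.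
by rewrite ler_pdivlMl.
Qed.

Lemma Mbound z : C z -> exists2 K : R, 0 < K & forall w, Mfun C w z <= K * `|w|.
Proof.
move=> Cz; have [r r0 Hr] := Copen Cz.
exists r^-1; first by rewrite invr_gt0.
move=> w; apply/ler_gtP => l lM.
have l0 : 0 < l by apply: le_lt_trans lM; rewrite mulr_ge0 // ltW // invr_gt0.
apply/(MP _ Cz l0); apply: clsub.
have -> : l *: z - w = l *: (z - l^-1 *: w).
  by rewrite scalerBr scalerA divff ?scale1r // gt_eqF.
apply: Cscale => //; apply: Hr.
rewrite opprB addrC subrK normrZ gtr0_norm ?invr_gt0 //.
by move: lM; rewrite mulrC ltr_pdivrMr // => lM; rewrite mulrC ltr_pdivrMr // mulrC.
Qed.

Lemma Mpos z u : C z -> closure C u -> u != 0 -> 0 < Mfun C u z.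
Proof.
move=> Cz cu u0; rewrite lt_neqAle Mge0 // andbT; apply/negP => /eqP M0.
apply/negP: u0; rewrite negbK; apply/eqP; apply: clneg => //.
apply: (cllim (a := z)) => e e0; rewrite addrC.
by apply/(MP _ Cz e0); rewrite -M0 ltW.
Qed.

Lemma lip_cont (f : V -> R) (K : R) : 0 < K ->
  (forall u v, f u <= f v + K * `|u - v|) -> continuous f.
Proof.
move=> K0 H x; apply/(@cvgrPdist_lt _ _ _ (nbhs x) (nbhs_filter x)) => e e0.
apply/nbhs_ballP; exists (e / K) => /=; first by rewrite divr_gt0.
move=> y; rewrite -ball_normE /= => hy.
rewrite real_ltr_norml ?num_real //; apply/andP; split.
  rewrite ltrNl opprB ltrBlDl; apply: le_lt_trans (H y x) _; rewrite ltrD2l.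
  by rewrite distrC -ltr_pdivlMl // mulrC.
rewrite ltrBlDl; apply: le_lt_trans (H x y) _; rewrite ltrD2l.
by rewrite -ltr_pdivlMl // mulrC.
Qed.

Lemma Mcont z : C z -> continuous (fun u => Mfun C u z).
Proof.
move=> Cz; have [K K0 HK] := Mbound Cz; apply: (lip_cont K0) => u v.
have := Msub v (u - v) Cz; rewrite addrC subrK => h.
by apply: le_trans h _; rewrite lerD2l.
Qed.

Definition Hf (b z : V) := fun y : V => RFunk C z y - RFunk C b y.

Lemma lnM_cont z u : C z -> closure C u -> u != 0 ->
  {for u, continuous (fun y => RFunk C z y)}.
Proof.
move=> Cz cu u0.
have -> : (fun y => RFunk C z y) = (@ln R) \o (fun y => Mfun C y z) by [].
apply: continuous_comp; first exact: Mcont.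
apply: continuous_ln; exact: Mpos.
Qed.

Lemma Hcont b z u : C b -> C z -> closure C u -> u != 0 -> {for u, continuous (Hf b z)}.
Proof.
move=> Cb Cz cu u0; apply: continuousB; exact: lnM_cont.
Qed.

Lemma RFscale z u c : C z -> closure C u -> u != 0 -> 0 < c ->
  RFunk C z (c *: u) = ln c + RFunk C z u.
Proof.
move=> Cz cu u0 c0; rewrite /RFunk /Funk Mscale // lnM // posrE //.
exact: Mpos.
Qed.

Lemma Hscale b z u c : C b -> C z -> closure C u -> u != 0 -> 0 < c ->
  Hf b z (c *: u) = Hf b z u.
Proof.
move=> Cb Cz cu u0 c0; rewrite /Hf (RFscale Cz cu u0 c0) (RFscale Cb cu u0 c0).
by rewrite opprD addrACA subrr add0r.
Qed.

Lemma bdryP x : bdry C x <-> closure C x /\ ~ C x.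
Proof.
case: hC => _ op _ _ _; rewrite /bdry.
have -> : interior C = C by apply/interior_id.
by split => [[]|[]]; split.
Qed.

Lemma Cne0 x : C x -> x != 0.
Proof. by case: hC => _ _ _ _ h0 Cx; apply/eqP => x0; apply: h0; rewrite -x0. Qed.

Lemma NI b x : C b -> bdry C x -> x != 0 -> ~ is_internal C b (rfun C b x).
Proof.
move=> Cb /bdryP [cx nCx] x0 [p Cp H].
have [r r0 Hr] := Copen Cp.
set E := expR (ln (Mfun C p b) - ln (Mfun C x b) + 1).
have E0 : 0 < E by rewrite expR_gt0.
have b0 : 0 < `|b| by rewrite normr_gt0 Cne0.
set eps := r / (2 * `|b| * E).
have eps0 : 0 < eps by rewrite divr_gt0 // !mulr_gt0.
set z := x + eps *: b.
have Cz : C z by exact: (clCadd cx (Cscale Cb eps0)).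
have := H z Cz; rewrite /rfun /RFunk /Funk.
have Mxz1 : Mfun C x z <= 1.
  have h : closure C (z - x) by rewrite /z addrC addKr; exact: (clsub (Cscale Cb eps0)).
  exact: le_trans (Mmono Cz h) (Mself Cz).
have lx : ln (Mfun C x z) <= 0 by apply: ln_le0.
have MpE : E < Mfun C p z.
  rewrite ltNge; apply/negP => /(MP _ Cz E0) hcl.
  have Cq : C (p - (E * eps) *: b).
    apply: Hr; rewrite opprB addrC subrK normrZ gtr0_norm; last exact: mulr_gt0.
    have -> : E * eps * `|b| = r / 2.
      by rewrite /eps; field; rewrite !gt_eqF.
    lra.
  have := clCadd hcl Cq.
  have -> : E *: z - p + (p - (E * eps) *: b) = E *: x.
    by rewrite /z scalerDr scalerA addrA subrK addrK.
  move=> CEx; apply: nCx; have Ei : 0 < E^-1 by rewrite invr_gt0.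
  have := Cscale CEx Ei.
  by rewrite scalerA mulVf ?gt_eqF // scale1r.
have hM : 0 < Mfun C p z := lt_trans E0 MpE.
have : ln E < ln (Mfun C p z) by rewrite ltr_ln ?posrE.
rewrite /E expRK; exact: aux_contra.
Qed.

Lemma Hprop b z x y : C b -> C z -> closure C x -> x != 0 -> closure C y -> y != 0 ->
  Hf b z x = Hf b z y -> Mfun C y z = (Mfun C y b / Mfun C x b) * Mfun C x z.
Proof.
move=> Cb Cz cx x0 cy y0; rewrite /Hf /RFunk /Funk => h.
have pxz := Mpos Cz cx x0; have pyz := Mpos Cz cy y0.
have pxb := Mpos Cb cx x0; have pyb := Mpos Cb cy y0.
have pk : 0 < Mfun C y b / Mfun C x b := divr_gt0 pyb pxb.
have pr : 0 < Mfun C y b / Mfun C x b * Mfun C x z := mulr_gt0 pk pxz.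
have q1 : Mfun C y z \in Num.pos by rewrite posrE; exact: pyz.
have q2 : Mfun C y b / Mfun C x b * Mfun C x z \in Num.pos by rewrite posrE; exact: pr.
have q3 : Mfun C y b / Mfun C x b \in Num.pos by rewrite posrE; exact: pk.
have q4 : Mfun C x z \in Num.pos by rewrite posrE; exact: pxz.
have q5 : Mfun C y b \in Num.pos by rewrite posrE; exact: pyb.
have q6 : (Mfun C x b)^-1 \in Num.pos by rewrite posrE invr_gt0; exact: pxb.
have q7 : Mfun C x b \in Num.pos by rewrite posrE; exact: pxb.
rewrite -[LHS](lnK q1) -[RHS](lnK q2); congr expR.
rewrite (lnM q3 q4) (lnM q5 q6) (lnV q7).
exact: aux_eq h.
Qed.

Lemma Ule b x y : C b -> closure C x -> x != 0 -> closure C y -> y != 0 ->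
  (forall z, C z -> Hf b z x = Hf b z y) ->
  closure C ((Mfun C y b / Mfun C x b) *: x - y).
Proof.
move=> Cb cx x0 cy y0 H.
set k := Mfun C y b / Mfun C x b.
have pk : 0 < k := divr_gt0 (Mpos Cb cy y0) (Mpos Cb cx x0).
apply: (cllim (a := b)) => e e0.
have ek : 0 < e / k := divr_gt0 e0 pk.
set z := x + (e / k) *: b.
have Cz : C z by exact: (clCadd cx (Cscale Cb ek)).
have Mxz1 : Mfun C x z <= 1.
  have h : closure C (z - x) by rewrite /z addrC addKr; exact: (clsub (Cscale Cb ek)).
  exact: le_trans (Mmono Cz h) (Mself Cz).
have : Mfun C y z <= k.
  rewrite (Hprop Cb Cz cx x0 cy y0 (H z Cz)) -/k.
  by rewrite -[X in _ <= X]mulr1 ler_pM2l.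
move/(MP y Cz pk).
have -> : k *: z - y = k *: x - y + e *: b.
  by rewrite /z scalerDr scalerA mulrC divfK ?gt_eqF // addrAC.
done.
Qed.

Lemma Uniq b x y : C b -> closure C x -> x != 0 -> closure C y -> y != 0 ->
  (forall z, C z -> Hf b z x = Hf b z y) ->
  y = (Mfun C y b / Mfun C x b) *: x.
Proof.
move=> Cb cx x0 cy y0 H.
have h1 := Ule Cb cx x0 cy y0 H.
have h2 := Ule Cb cy y0 cx x0 (fun z Cz => esym (H z Cz)).
set k := Mfun C y b / Mfun C x b.
have pxb := Mpos Cb cx x0; have pyb := Mpos Cb cy y0.
have pk : 0 < k := divr_gt0 pyb pxb.
have := clscale h2 (ltW pk).
rewrite (scale_aux _ _ (aux_inv pyb pxb)).
move=> h3; have := clneg h1 h3; move/eqP; rewrite subr_eq0 => /eqP e; exact: esym e.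
Qed.

Definition path (b x : V) := fun k : nat => x + (@harmonic R k) *: b.

Lemma path_cvg b x : path b x @ \oo --> x.
Proof.
have := cvgD (cvg_cst x) (cvgZ (@cvg_harmonic R) (cvg_cst b)).
rewrite scale0r addr0 => h; exact: h.
Qed.

Lemma path_C b x : C b -> closure C x -> forall k, C (path b x k).
Proof. by move=> Cb cx k; exact: (clCadd cx (Cscale Cb (harmonic_gt0 k))). Qed.

Lemma path_conv b x : C b -> closure C x -> x != 0 ->
  RF_converges C b (path b x) (rfun C b x).
Proof.
move=> Cb cx x0; split; first exact: path_C.
move=> z Cz; exact: (continuous_cvg _ (Hcont Cb Cz cx x0) (@path_cvg b x)).
Qed.

Lemma harm_le (j k : nat) : (j <= k)%N -> @harmonic R k <= harmonic j.
Proof.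
move=> jk; rewrite /= lef_pV2 ?posrE ?ltr0n // ler_nat ltnS //.
Qed.

Lemma path_le b x j k : C b -> (j <= k)%N -> closure C (path b x j - path b x k).
Proof.
move=> Cb jk; rewrite /path opprD addrACA subrr add0r -scalerBl; apply: clscale.
  exact: clsub.
by rewrite subr_ge0 harm_le.
Qed.

Lemma path_geo b x : C b -> closure C x -> x != 0 -> almost_geodesic C (path b x).
Proof.
move=> Cb cx x0; split; first exact: path_C.
have C0 := path_C Cb cx 0.
set m := ln (Mfun C x (path b x 0)).
have e0 : 0 < `|m| + 1 by rewrite ltr_wpDl.
exists (`|m| + 1) => // l l1.
have hs : \sum_(1 <= i < l.+1) RFunk C (path b x i.-1) (path b x i) <= 0.
  apply: sumr_le0 => i _; rewrite /RFunk /Funk.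
  have Ci := path_C Cb cx i.-1.
  apply: ln_le0; apply: le_trans (Mself Ci).
  apply: (Mmono Ci); apply: path_le => //; exact: leq_pred.
apply: le_trans hs _.
have hx : m <= RFunk C (path b x 0) (path b x l).
  rewrite /m /RFunk /Funk.
  have p1 := Mpos C0 cx x0.
  have cl : closure C (path b x l - x) by rewrite /path addrC addKr; exact: (clsub (Cscale Cb (harmonic_gt0 l))).
  have p2 := lt_le_trans p1 (Mmono C0 cl).
  rewrite ler_ln ?posrE; last exact: p2. exact: (Mmono C0 cl). exact: p1.
move: hx; generalize (RFunk C (path b x 0) (path b x l)) => t; rewrite -/m => hx.
have : - m <= `|m| by rewrite -normrN; exact: ler_norm.
move: hx; generalize m => m' h1 h2.
lra.
Qed.

Lemma psi_lin (psi : V -> R) : cross_section_functional C psi ->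
  [/\ psi 0 = 0, (forall u v, psi (u + v) = psi u + psi v),
      (forall u c, psi (c *: u) = c * psi u) & (forall w, closure C w -> 0 <= psi w)].
Proof.
case=> H Hp.
have h0 : psi 0 = 0.
  have := H 1 0 0; rewrite scaler0 addr0 mul1r => e.
  have := congr1 (fun t => t - psi 0) e; rewrite /= subrr addrK => e2; exact: esym e2.
have hadd : forall u v, psi (u + v) = psi u + psi v.
  by move=> u v; have := H 1 u v; rewrite scale1r mul1r.
split => //.
- by move=> u c; have := H c u 0; rewrite !addr0 h0 addr0.
- move=> w cw; case: (eqVneq w 0) => [->|w0]; first by rewrite h0.
  exact: ltW (Hp w cw w0).
Qed.

Lemma psi_cont b (psi : V -> R) : C b -> cross_section_functional C psi -> continuous psi.
Proof.
move=> Cb hp; have [h0 hadd hsc hnn] := psi_lin hp.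
have pb : 0 < psi b by case: hp => _ Hp; apply: Hp; [exact: clsub|exact: Cne0].
have [K K0 HK] := Mbound Cb.
have hle : forall v, psi v <= (K * psi b) * `|v|.
  move=> v; rewrite mulrAC -ler_pdivrMr //; apply/ler_gtP => l hl.
  have l0 : 0 < l by apply: le_lt_trans hl; rewrite mulr_ge0 // ltW.
  have := (MP v Cb l0).2 (le_trans (HK v) (ltW hl)).
  move/hnn; rewrite -scaleN1r hadd !hsc mulN1r subr_ge0.
  by rewrite ler_pdivrMr.
have KK : 0 < K * psi b by rewrite mulr_gt0.
apply: (lip_cont KK) => u v.
have -> : u = v + (u - v) by rewrite addrC subrK.
by rewrite hadd lerD2l [X in `|X - v|]addrC addrK; apply: hle.
Qed.

Definition nrm (xs : nat -> V) := fun k => `|xs k|^-1 *: xs k.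

Lemma nrm_pos (xs : nat -> V) k : C (xs k) -> 0 < `|xs k|^-1.
Proof. by move=> Cx; rewrite invr_gt0 normr_gt0 Cne0. Qed.

Lemma nrm1 (xs : nat -> V) : (forall k, C (xs k)) -> forall k, `|nrm xs k| = 1.
Proof.
move=> HC k; rewrite /nrm normrZ gtr0_norm; last exact: nrm_pos.
by rewrite mulVf // normr_eq0 Cne0.
Qed.

Lemma nrm_C (xs : nat -> V) : (forall k, C (xs k)) -> forall k, C (nrm xs k).
Proof. by move=> HC k; apply: Cscale; [exact: HC | exact: nrm_pos]. Qed.

Lemma cluster_H b xs g y : C b -> RF_converges C b xs g -> cluster (nrm xs @ \oo) y ->
  [/\ closure C y, y != 0 & forall z, C z -> Hf b z y = g z].
Proof.
move=> Cb [HC Hg] cy.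
have cly := cluster_sub (nrm_C HC) cy.
have y1 := cluster_norm (nrm1 HC) cy.
have y0 : y != 0 by rewrite -normr_eq0 y1 oner_neq0.
split => // z Cz; apply: (cluster_val cy (Hcont Cb Cz cly y0)).
have -> : (fun k => Hf b z (nrm xs k)) = (fun k => RFunk C z (xs k) - RFunk C b (xs k)).
  apply: funext => k; rewrite /nrm.
  exact: (Hscale Cb Cz (clsub (HC k)) (Cne0 (HC k)) (nrm_pos (HC k))).
exact: Hg.
Qed.

Lemma part1_fwd b g : C b -> horofunction C b g ->
  exists x, [/\ bdry C x, x != 0 & forall z, C z -> g z = rfun C b x z].
Proof.
move=> Cb [[xs hxs] nint].
have [y cy] := cluster_exists (nrm1 hxs.1).
have [cly y0 Hy] := cluster_H Cb hxs cy.
exists y; split => //; last by move=> z Cz; rewrite -Hy.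
apply/bdryP; split => // Cy; apply: nint; exists y => // z Cz; by rewrite -Hy.
Qed.

Lemma part1_bwd b g x : C b -> bdry C x -> x != 0 ->
  (forall z, C z -> g z = rfun C b x z) -> horofunction C b g.
Proof.
move=> Cb bx x0 Hg; have [cx _] := (bdryP x).1 bx.
split.
  exists (path b x); split; first exact: path_C.
  move=> z Cz; rewrite Hg //; exact: (path_conv Cb cx x0).2.
move=> [p Cp Hp]; apply: (NI Cb bx x0); exists p; first exact: Cp.
move=> z Cz; rewrite -(Hg z Cz); exact: (Hp z Cz).
Qed.

Lemma part2 b x : C b -> bdry C x -> x != 0 -> busemann_point C b (rfun C b x).
Proof.
move=> Cb bx x0; have [cx _] := (bdryP x).1 bx.
split; last exact: NI.
exists (path b x); [exact: path_geo | exact: path_conv].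
Qed.

Lemma part3_bwd b x (xs : nat -> V) : C b -> closure C x -> x != 0 ->
  (forall k, C (xs k)) ->
  (exists2 l : R, 0 < l & xs @ \oo --> l *: x) -> RF_converges C b xs (rfun C b x).
Proof.
move=> Cb cx x0 HC [l l0 hl]; split => // z Cz.
have clx : closure C (l *: x) := clscale cx (ltW l0).
have lx0 : l *: x != 0 by rewrite scaler_eq0 negb_or x0 andbT lt0r_neq0.
have h := continuous_cvg _ (Hcont Cb Cz clx lx0) hl.
rewrite (Hscale Cb Cz cx x0 l0) in h; exact: h.
Qed.

Lemma scale_aux2 (a c : R) (u : V) : a != 0 -> c != 0 -> (c * a)^-1 *: (c *: u) = a^-1 *: u.
Proof. by move=> a0 c0; rewrite scalerA invfM mulrAC mulVf // mul1r. Qed.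

Lemma part3_fwd b psi x xs : C b -> cross_section_functional C psi -> closure C x -> x != 0 ->
  (forall k, C (xs k) /\ psi (xs k) = 1) ->
  RF_converges C b xs (rfun C b x) -> exists2 l : R, 0 < l & xs @ \oo --> l *: x.
Proof.
move=> Cb hp cx x0 Hxs hconv.
have HC : forall k, C (xs k) by move=> k; case: (Hxs k).
have [h0 hadd hsc hnn] := psi_lin hp.
have nx : 0 < `|x| by rewrite normr_gt0.
set p := `|x|^-1 *: x.
have p1 : `|p| = 1.
  by rewrite /p normrZ gtr0_norm ?invr_gt0 // mulVf // lt0r_neq0.
have hnrm : nrm xs @ \oo --> p.
  apply: (cvg_unique_cluster (nrm1 HC) p1) => y cy.
  have [cly y0 Hy] := cluster_H Cb hconv cy.
  have ey := Uniq Cb cx x0 cly y0 (fun z Cz => esym (Hy z Cz)).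
  set k := Mfun C y b / Mfun C x b in ey.
  have pk : 0 < k := divr_gt0 (Mpos Cb cly y0) (Mpos Cb cx x0).
  have y1 := cluster_norm (nrm1 HC) cy.
  have hk : k * `|x| = 1 by rewrite -y1 ey normrZ gtr0_norm.
  have ek : k = `|x|^-1.
    by apply/(mulIf (lt0r_neq0 nx)); rewrite mulVf ?lt0r_neq0.
  by rewrite ey ek.
have px : 0 < psi x by case: hp => _ Hp; exact: Hp.
have pp : psi p != 0 by rewrite /p hsc mulf_neq0 ?invr_eq0 ?lt0r_neq0.
have pc : {for p, continuous psi} by apply: (psi_cont Cb hp).
have hw := cvgZ (cvgV pp (continuous_cvg _ pc hnrm)) hnrm.
exists (psi x)^-1; first by rewrite invr_gt0.
have -> : xs = fun k => (psi (nrm xs k))^-1 *: nrm xs k.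
  apply: funext => k; rewrite /nrm hsc (Hxs k).2 mulr1 scalerA invrK.
  by rewrite divff ?scale1r // normr_eq0 Cne0.
have ix : `|x|^-1 != 0 by rewrite invr_eq0 lt0r_neq0.
move: hw; rewrite /p hsc (scale_aux2 _ (lt0r_neq0 px) ix) => h; exact: h.
Qed.
End S.

Theorem mainTheorem4 (R : realType) (n : nat) (C : set 'rV[R]_n) (b : 'rV[R]_n) :
  open_cone C -> no_lines C -> C b ->
  [/\ (forall g : 'rV[R]_n -> R,
         horofunction C b g <->
         exists x, [/\ bdry C x, x != 0 & forall z, C z -> g z = rfun C b x z]),
      (forall x, bdry C x -> x != 0 -> busemann_point C b (rfun C b x)) &
      (forall (psi : 'rV[R]_n -> R), cross_section_functional C psi ->
       forall x, bdry C x -> x != 0 ->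
       forall xs : nat -> 'rV[R]_n, (forall k, C (xs k) /\ psi (xs k) = 1) ->
         (RF_converges C b xs (rfun C b x) <->
          exists2 l : R, 0 < l & xs @ \oo --> l *: x))].
Proof.
move=> hC hL Cb; split.
- move=> g; split; first exact: part1_fwd.
  by move=> [x [bx x0 Hg]]; exact: (part1_bwd hC hL Cb bx x0 Hg).
- move=> x bx x0; exact: part2.
- move=> psi hp x bx x0 xs Hxs; have [cx _] := (bdryP hC x).1 bx; split.
  + exact: (part3_fwd hC hL Cb hp cx x0 Hxs).
  + apply: (part3_bwd hC hL Cb cx x0); move=> k; case: (Hxs k) => //.
Qed.
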